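(* Let $\mathsf{C}$ be an additive $\Bbbk$-linear category. For $n\in\mathbb{N}$ let $\mathsf{C}_n=\mathsf{C}_{M_n(\Bbbk)}$ and let $\widetilde{\mathsf{C}}_n=\mathsf{C}_n^{\omega}$ be its idempotent completion. Then there is a $\Bbbk$-linear equivalence of categories $\mathsf{C}^{\omega}\to\widetilde{\mathsf{C}}_n$. In particular, if $\mathsf{C}$ is idempotent complete, then $\mathsf{C}\simeq\widetilde{\mathsf{C}}_n$ for every $n\in\mathbb{N}$.
   Context: $\Bbbk$ is a field. For a $\Bbbk$-linear category $\mathsf{C}$ and a $\Bbbk$-algebra $\Gamma$, the category $\mathsf{C}_\Gamma$ has the same objects as $\mathsf{C}$, morphism spaces $\mathrm{Hom}_{\mathsf{C}_\Gamma}(X,Y)=\Gamma\otimes_{\Bbbk}\mathrm{Hom}_{\mathsf{C}}(X,Y)$, and composition induced by composition in $\mathsf{C}$ and multiplication in $\Gamma$. For an additive category $\mathcal{D}$, $\mathcal{D}^{\omega}$ denotes its idempotent completion (Karoubi envelope): objects are pairs $(X,e)$ with $e$ an idempotent endomorphism of $X$, and morphisms $(X,e)\to(Y,e')$ are $e'\,\mathrm{Hom}(X,Y)\,e$. *)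

(* Defs.v *)
From HB Require Import structures.
From mathcomp Require Import all_boot all_order all_algebra.
Set Implicit Arguments. Unset Strict Implicit. Unset Printing Implicit Defensive.
Import Order.TTheory GRing.Theory Num.Theory.
Local Open Scope ring_scope.

Record kcat (K : fieldType) := KCat {
  obj :> Type;
  hom : obj -> obj -> lmodType K;
  comp : forall X Y Z : obj, hom Y Z -> hom X Y -> hom X Z;
  idm : forall X : obj, hom X X;
  compA : forall X Y Z W (f : hom Z W) (g : hom Y Z) (h : hom X Y),
     comp f (comp g h) = comp (comp f g) h;
  comp1f : forall X Y (f : hom X Y), comp (idm Y) f = f;
  compf1 : forall X Y (f : hom X Y), comp f (idm X) = f;
  comp_linl : forall X Y Z (h : hom X Y) (a : K) (f g : hom Y Z),
     comp (a *: f + g) h = a *: comp f h + comp g h;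
  comp_linr : forall X Y Z (f : hom Y Z) (a : K) (g h : hom X Y),
     comp f (a *: g + h) = a *: comp f g + comp f h }.
Arguments obj {K} k.
Arguments hom {K} k X Y.
Arguments comp {K} k {X Y Z}.
Arguments idm {K} k X.

Section Basics.
Variables (K : fieldType) (C : kcat K).

Lemma comp0l {X Y Z : C} (h : hom C X Y) : comp C (0 : hom C Y Z) h = 0.
Proof.
have := comp_linl h (-1) (0 : hom C Y Z) 0.
by rewrite scaleN1r addNr => ->; rewrite scaleN1r addNr.
Qed.
Lemma comp0r {X Y Z : C} (f : hom C Y Z) : comp C f (0 : hom C X Y) = 0.
Proof.
have := comp_linr f (-1) (0 : hom C X Y) 0.
by rewrite scaleN1r addNr => ->; rewrite scaleN1r addNr.
Qed.
Lemma compDl {X Y Z : C} (h : hom C X Y) (f g : hom C Y Z) :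
  comp C (f + g) h = comp C f h + comp C g h.
Proof. by have := comp_linl h 1 f g; rewrite !scale1r. Qed.
Lemma compDr {X Y Z : C} (f : hom C Y Z) (g h : hom C X Y) :
  comp C f (g + h) = comp C f g + comp C f h.
Proof. by have := comp_linr f 1 g h; rewrite !scale1r. Qed.
Lemma compZl {X Y Z : C} (h : hom C X Y) a (f : hom C Y Z) :
  comp C (a *: f) h = a *: comp C f h.
Proof. by have := comp_linl h a f 0; rewrite !addr0 comp0l addr0. Qed.
Lemma compZr {X Y Z : C} (f : hom C Y Z) a (g : hom C X Y) :
  comp C f (a *: g) = a *: comp C f g.
Proof. by have := comp_linr f a g 0; rewrite !addr0 comp0r addr0. Qed.
Lemma comp_suml {X Y Z : C} (h : hom C X Y) (I : finType) (F : I -> hom C Y Z) :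
  comp C (\sum_i F i) h = \sum_i comp C (F i) h.
Proof. by rewrite (big_morph (fun f => comp C f h) (compDl h) (comp0l h)). Qed.
Lemma comp_sumr {X Y Z : C} (f : hom C Y Z) (I : finType) (F : I -> hom C X Y) :
  comp C f (\sum_i F i) = \sum_i comp C f (F i).
Proof. by rewrite (big_morph (fun g => comp C f g) (compDr f) (comp0r f)). Qed.
End Basics.

Definition is_zero_obj (K : fieldType) (C : kcat K) (Z : C) : Prop :=
  idm C Z = 0.

Definition is_biproduct (K : fieldType) (C : kcat K) (X Y S : C)
  (i1 : hom C X S) (i2 : hom C Y S) (p1 : hom C S X) (p2 : hom C S Y) : Prop :=
  [/\ comp C p1 i1 = idm C X, comp C p2 i2 = idm C Y,
      comp C p1 i2 = 0, comp C p2 i1 = 0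
    & comp C i1 p1 + comp C i2 p2 = idm C S].

Definition additive (K : fieldType) (C : kcat K) : Prop :=
  (exists Z : C, is_zero_obj Z) /\
  forall X Y : C, exists (S : C) (i1 : hom C X S) (i2 : hom C Y S)
    (p1 : hom C S X) (p2 : hom C S Y), is_biproduct i1 i2 p1 p2.

Definition idempotent_complete (K : fieldType) (C : kcat K) : Prop :=
  forall (X : C) (e : hom C X X), comp C e e = e ->
    exists (Y : C) (s : hom C Y X) (r : hom C X Y),
      comp C r s = idm C Y /\ comp C s r = e.

(* C_{M_n(k)}: Hom = M_n(k) (x) Hom_C(X,Y), identified with n x n matrices
   with entries in Hom_C(X,Y) (the entry (i,j) of E_ij (x) f is f), and
   composition (a (x) f)(b (x) g) = ab (x) fg, i.e. matrix multiplication. *)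
Section MatCat.
Variables (K : fieldType) (C : kcat K) (n : nat).

Definition mhom (X Y : C) : lmodType K := {ffun 'I_n * 'I_n -> hom C X Y}.

Definition mcomp (X Y Z : C) (F : mhom Y Z) (G : mhom X Y) : mhom X Z :=
  [ffun ij : 'I_n * 'I_n => \sum_(k < n) comp C (F (ij.1, k)) (G (k, ij.2))].

Definition midm (X : C) : mhom X X :=
  [ffun ij : 'I_n * 'I_n => if ij.1 == ij.2 then idm C X else 0].

Lemma mcompA X Y Z W (f : mhom Z W) (g : mhom Y Z) (h : mhom X Y) :
  mcomp f (mcomp g h) = mcomp (mcomp f g) h.
Proof.
apply/ffunP => -[i j]; rewrite !ffunE /=.
under eq_bigr => k _ do rewrite ffunE comp_sumr.
rewrite exchange_big /=; apply: eq_bigr => l _.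
by rewrite ffunE comp_suml; apply: eq_bigr => k _; rewrite compA.
Qed.

Lemma mcomp1f X Y (f : mhom X Y) : mcomp (midm Y) f = f.
Proof.
apply/ffunP => -[i j]; rewrite !ffunE /= (bigD1 i) //= big1 ?addr0.
  by rewrite ffunE eqxx comp1f.
by move=> k /negbTE ki; rewrite ffunE /= eq_sym ki comp0l.
Qed.

Lemma mcompf1 X Y (f : mhom X Y) : mcomp f (midm X) = f.
Proof.
apply/ffunP => -[i j]; rewrite !ffunE /= (bigD1 j) //= big1 ?addr0.
  by rewrite ffunE eqxx compf1.
by move=> k /negbTE kj; rewrite ffunE /= kj comp0r.
Qed.

Lemma mcomp_linl X Y Z (h : mhom X Y) (a : K) (f g : mhom Y Z) :
  mcomp (a *: f + g) h = a *: mcomp f h + mcomp g h.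
Proof.
apply/ffunP => -[i j]; rewrite !ffunE /= scaler_sumr -big_split /=.
by apply: eq_bigr => k _; rewrite !ffunE comp_linl.
Qed.

Lemma mcomp_linr X Y Z (f : mhom Y Z) (a : K) (g h : mhom X Y) :
  mcomp f (a *: g + h) = a *: mcomp f g + mcomp f h.
Proof.
apply/ffunP => -[i j]; rewrite !ffunE /= scaler_sumr -big_split /=.
by apply: eq_bigr => k _; rewrite !ffunE comp_linr.
Qed.

Definition matcat : kcat K :=
  KCat mcompA mcomp1f mcompf1 mcomp_linl mcomp_linr.
End MatCat.

Section Karoubi.
Variables (K : fieldType) (C : kcat K).

Definition kobj := {X : C & {e : hom C X X | comp C e e = e}}.
Definition kob (A : kobj) : C := projT1 A.
Definition kid (A : kobj) : hom C (kob A) (kob A) := proj1_sig (projT2 A).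
Lemma kidP (A : kobj) : comp C (kid A) (kid A) = kid A.
Proof. exact: proj2_sig (projT2 A). Qed.

Definition kpred (A B : kobj) : {pred hom C (kob A) (kob B)} :=
  fun f => comp C (kid B) (comp C f (kid A)) == f.
Arguments kpred : clear implicits.

Lemma kpred_submod (A B : kobj) : GRing.submod_closed (kpred A B).
Proof.
split; first by rewrite /kpred unfold_in /= comp0l comp0r.
move=> a u v; rewrite /kpred !unfold_in /= => /eqP Hu /eqP Hv.
by rewrite comp_linl comp_linr Hu Hv.
Qed.

HB.instance Definition _ (A B : kobj) :=
  GRing.isSubmodClosed.Build K (hom C (kob A) (kob B)) (kpred A B)
    (GRing.submod_closed_semi (kpred_submod A B)).

Record khom_t (A B : kobj) := KHom {
  kval :> hom C (kob A) (kob B); kvalP : kval \in kpred A B }.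
HB.instance Definition _ (A B : kobj) := [isSub for @kval A B].
HB.instance Definition _ (A B : kobj) := [Choice of khom_t A B by <:].
HB.instance Definition _ (A B : kobj) :=
  [SubChoice_isSubLmodule of khom_t A B by <:].
Definition khom (A B : kobj) : lmodType K := khom_t A B.

Lemma kpred_l (A B : kobj) (f : hom C (kob A) (kob B)) :
  f \in kpred A B -> comp C (kid B) f = f.
Proof.
rewrite unfold_in => /eqP Hf; rewrite -{2}Hf -{1}Hf.
by rewrite compA kidP.
Qed.
Lemma kpred_r (A B : kobj) (f : hom C (kob A) (kob B)) :
  f \in kpred A B -> comp C f (kid A) = f.
Proof.
rewrite unfold_in => /eqP Hf; rewrite -{2}Hf -{1}Hf.
by rewrite -!compA kidP.
Qed.

Lemma kcomp_subproof (A B D : kobj) (f : khom B D) (g : khom A B) :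
  comp C (val f) (val g) \in kpred A D.
Proof.
rewrite unfold_in /=; apply/eqP.
by rewrite -compA kpred_r ?compA ?kpred_l //; apply: valP.
Qed.
Definition kcomp (A B D : kobj) (f : khom B D) (g : khom A B) : khom A D :=
  KHom (kcomp_subproof f g).

Lemma kidm_subproof (A : kobj) : kid A \in kpred A A.
Proof. by rewrite unfold_in /= !kidP. Qed.
Definition kidm (A : kobj) : khom A A := KHom (kidm_subproof A).

Lemma kcompA A B D E (f : khom D E) (g : khom B D) (h : khom A B) :
  kcomp f (kcomp g h) = kcomp (kcomp f g) h.
Proof. by apply: val_inj; rewrite /= compA. Qed.
Lemma kcomp1f A B (f : khom A B) : kcomp (kidm B) f = f.
Proof. by apply: val_inj; rewrite /= kpred_l //; apply: valP. Qed.
Lemma kcompf1 A B (f : khom A B) : kcomp f (kidm A) = f.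
Proof. by apply: val_inj; rewrite /= kpred_r //; apply: valP. Qed.
Lemma kcomp_linl A B D (h : khom A B) (a : K) (f g : khom B D) :
  kcomp (a *: f + g) h = a *: kcomp f h + kcomp g h.
Proof. by apply: val_inj; rewrite /= comp_linl. Qed.
Lemma kcomp_linr A B D (f : khom B D) (a : K) (g h : khom A B) :
  kcomp f (a *: g + h) = a *: kcomp f g + kcomp f h.
Proof. by apply: val_inj; rewrite /= comp_linr. Qed.

Definition karoubi : kcat K :=
  @KCat K kobj khom kcomp kidm kcompA kcomp1f kcompf1 kcomp_linl kcomp_linr.

End Karoubi.

Record kfunctor (K : fieldType) (C D : kcat K) := KFunctor {
  fobj : C -> D;
  fmap : forall X Y : C, hom C X Y -> hom D (fobj X) (fobj Y);
  fmap_lin : forall (X Y : C) (a : K) (f g : hom C X Y),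
    fmap (a *: f + g) = a *: fmap f + fmap g;
  fmap_comp : forall (X Y Z : C) (f : hom C Y Z) (g : hom C X Y),
    fmap (comp C f g) = comp D (fmap f) (fmap g);
  fmap_id : forall X : C, fmap (idm C X) = idm D (fobj X) }.
Arguments fobj {K C D} k X.
Arguments fmap {K C D} k {X Y} _.

Definition is_iso (K : fieldType) (C : kcat K) (X Y : C) (f : hom C X Y) : Prop :=
  exists g : hom C Y X, comp C g f = idm C X /\ comp C f g = idm C Y.

Definition is_kequivalence (K : fieldType) (C D : kcat K) (F : kfunctor C D) : Prop :=
  exists G : kfunctor D C,
    (exists eta : forall X : C, hom C X (fobj G (fobj F X)),
       (forall X : C, is_iso (eta X)) /\
       (forall (X Y : C) (f : hom C X Y),
          comp C (fmap G (fmap F f)) (eta X) = comp C (eta Y) f)) /\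
    (exists eps : forall Y : D, hom D (fobj F (fobj G Y)) Y,
       (forall Y : D, is_iso (eps Y)) /\
       (forall (X Y : D) (g : hom D X Y),
          comp D (eps Y) (fmap F (fmap G g)) = comp D g (eps X))).

Definition kequivalent (K : fieldType) (C D : kcat K) : Prop :=
  exists F : kfunctor C D, is_kequivalence F.

(* Main.v *)
Require Import Defs.
From HB Require Import structures.
From mathcomp Require Import all_boot all_order all_algebra.
From Stdlib Require Import ClassicalEpsilon.

Module Helpers.
Import Defs.
Set Implicit Arguments. Unset Strict Implicit. Unset Printing Implicit Defensive.
Import GRing.Theory.
Local Open Scope ring_scope.

Section FFES.
Variables (K : fieldType) (A B : kcat K) (F : kfunctor A B).
Variable finj : forall X Y (f g : hom A X Y), fmap F f = fmap F g -> f = g.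
Variable ffull : forall X Y (g : hom B (fobj F X) (fobj F Y)), exists f, fmap F f = g.
Variable fes : forall b : B, exists a, exists f : hom B (fobj F a) b, is_iso f.

Definition pre X Y (g : hom B (fobj F X) (fobj F Y)) : hom A X Y :=
  proj1_sig (constructive_indefinite_description _ (ffull g)).
Lemma preK X Y g : fmap F (@pre X Y g) = g.
Proof. exact: proj2_sig (constructive_indefinite_description _ (ffull g)). Qed.

Definition Gob (b : B) : A := proj1_sig (constructive_indefinite_description _ (fes b)).
Lemma Gob_spec b : exists f : hom B (fobj F (Gob b)) b, is_iso f.
Proof. exact: proj2_sig (constructive_indefinite_description _ (fes b)). Qed.
Definition phi b : hom B (fobj F (Gob b)) b :=
  proj1_sig (constructive_indefinite_description _ (Gob_spec b)).
Definition phiS b : is_iso (phi b) :=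
  proj2_sig (constructive_indefinite_description _ (Gob_spec b)).
Definition psi b : hom B b (fobj F (Gob b)) :=
  proj1_sig (constructive_indefinite_description _ (phiS b)).
Lemma psiS b : comp B (psi b) (phi b) = idm B _ /\ comp B (phi b) (psi b) = idm B _.
Proof. exact: proj2_sig (constructive_indefinite_description _ (phiS b)). Qed.

Definition Gmap (b b' : B) (g : hom B b b') : hom A (Gob b) (Gob b') :=
  pre (comp B (psi b') (comp B g (phi b))).

Lemma Gmap_lin (X Y : B) (a : K) (f g : hom B X Y) :
  Gmap (a *: f + g) = a *: Gmap f + Gmap g.
Proof.
apply: finj; rewrite fmap_lin !preK.
by rewrite comp_linl comp_linr.
Qed.

Lemma Gmap_comp (X Y Z : B) (f : hom B Y Z) (g : hom B X Y) :
  Gmap (comp B f g) = comp A (Gmap f) (Gmap g).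
Proof.
apply: finj; rewrite fmap_comp !preK.
rewrite !compA -[comp B (comp B (comp B _ f) (phi Y)) (psi Y)]compA (proj2 (psiS Y)) compf1.
by rewrite ?compA.
Qed.

Lemma Gmap_id (X : B) : Gmap (idm B X) = idm A (Gob X).
Proof.
apply: finj; rewrite fmap_id !preK comp1f.
exact: (proj1 (psiS X)).
Qed.

Definition G : kfunctor B A := KFunctor Gmap_lin Gmap_comp Gmap_id.

Lemma ffes_equiv : is_kequivalence F.
Proof.
exists G; split.
  exists (fun X => pre (psi (fobj F X))); split.
    move=> X; exists (pre (phi (fobj F X))); split.
      by apply: finj; rewrite fmap_comp !preK fmap_id (proj2 (psiS _)).
    by apply: finj; rewrite fmap_comp !preK fmap_id (proj1 (psiS _)).
  move=> X Y f; apply: finj; rewrite !fmap_comp !preK /=.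
  by rewrite -!compA (proj2 (psiS _)) compf1.
exists phi; split.
  by move=> Y; exact: phiS.
move=> X Y g /=; rewrite /Gmap preK !compA (proj2 (psiS Y)) comp1f //.
Qed.
End FFES.
Section Mat.
Variables (K : fieldType) (C : kcat K) (n : nat) (i0 : 'I_n).
Local Notation M := (matcat C n).

Lemma mcE (X Y Z : C) (f : hom M Y Z) (g : hom M X Y) : comp M f g = mcomp f g.
Proof. by []. Qed.
Lemma midE (X : C) : idm M X = @midm K C n X.
Proof. by []. Qed.

Definition d00 (X Y : C) (f : hom C X Y) : hom M X Y :=
  [ffun ij : 'I_n * 'I_n => if (ij.1 == i0) && (ij.2 == i0) then f else 0].

Lemma d00_lin (X Y : C) a (f g : hom C X Y) : d00 (a *: f + g) = a *: d00 f + d00 g.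
Proof.
apply/ffunP => -[i j]; rewrite !ffunE /=.
by case: ifP => _; rewrite ?scaler0 ?addr0.
Qed.

Lemma d00_inj (X Y : C) (f g : hom C X Y) : d00 f = d00 g -> f = g.
Proof. by move/ffunP => /(_ (i0, i0)); rewrite !ffunE /= eqxx. Qed.

Lemma mcomp_d00l (X Y Z : C) (f : hom C Y Z) (N : hom M X Y) :
  comp M (d00 f) N = [ffun ij : 'I_n * 'I_n => if ij.1 == i0 then comp C f (N (i0, ij.2)) else 0].
Proof.
apply/ffunP => -[i j]; rewrite mcE !ffunE /= (bigD1 i0) //= big1 ?addr0.
  by rewrite ffunE /= eqxx andbT; case: ifP => _; rewrite ?comp0l.
by move=> k /negbTE kn; rewrite ffunE /= kn andbF comp0l.
Qed.

Lemma mcomp_d00r (X Y Z : C) (N : hom M Y Z) (g : hom C X Y) :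
  comp M N (d00 g) = [ffun ij : 'I_n * 'I_n => if ij.2 == i0 then comp C (N (ij.1, i0)) g else 0].
Proof.
apply/ffunP => -[i j]; rewrite mcE !ffunE /= (bigD1 i0) //= big1 ?addr0.
  by rewrite ffunE /= eqxx /=; case: ifP => _; rewrite ?comp0r.
by move=> k /negbTE kn; rewrite ffunE /= kn /= comp0r.
Qed.

Lemma d00_comp (X Y Z : C) (f : hom C Y Z) (g : hom C X Y) :
  comp M (d00 f) (d00 g) = d00 (comp C f g).
Proof.
rewrite mcomp_d00l; apply/ffunP => -[i j]; rewrite !ffunE /= eqxx /=.
by case: (i == i0) => //=; case: (j == i0); rewrite ?comp0r.
Qed.

Lemma d00_sand (X Y Z W : C) (f : hom C Z W) (N : hom M Y Z) (g : hom C X Y) :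
  comp M (d00 f) (comp M N (d00 g)) = d00 (comp C f (comp C (N (i0, i0)) g)).
Proof.
rewrite mcomp_d00r mcomp_d00l; apply/ffunP => -[i j]; rewrite !ffunE /=.
by case: (i == i0) => //=; case: (j == i0); rewrite ?comp0r.
Qed.

Lemma d00_id (X : C) : comp M (d00 (idm C X)) (d00 (idm C X)) = d00 (idm C X).
Proof. by rewrite d00_comp comp1f. Qed.

Variables (X S : C) (io : 'I_n -> hom C X S) (pr : 'I_n -> hom C S X).
Definition Pm : hom M S X := [ffun ij : 'I_n * 'I_n => if ij.2 == i0 then pr ij.1 else 0].
Definition Qm : hom M X S := [ffun ij : 'I_n * 'I_n => if ij.1 == i0 then io ij.2 else 0].

Lemma PQ : (forall i j, comp C (pr i) (io j) = if i == j then idm C X else 0) ->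
  comp M Pm Qm = idm M X.
Proof.
move=> H; apply/ffunP => -[i j]; rewrite mcE !ffunE /= (bigD1 i0) //= big1 ?addr0.
  by rewrite !ffunE /= !eqxx H.
by move=> k /negbTE kn; rewrite !ffunE /= kn comp0r.
Qed.

Lemma d00Q : comp M (d00 (idm C S)) Qm = Qm.
Proof.
rewrite mcomp_d00l; apply/ffunP => -[i j]; rewrite !ffunE /= eqxx comp1f.
by case: eqP => // ->.
Qed.

Lemma Pd00 : comp M Pm (d00 (idm C S)) = Pm.
Proof.
rewrite mcomp_d00r; apply/ffunP => -[i j]; rewrite !ffunE /= eqxx compf1.
by case: eqP => // ->.
Qed.
End Mat.

Lemma nbip (K : fieldType) (C : kcat K)
  (Hb : forall X Y : C, exists (S : C) (i1 : hom C X S) (i2 : hom C Y S)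
    (p1 : hom C S X) (p2 : hom C S Y), is_biproduct i1 i2 p1 p2) (m : nat) (X : C) :
  exists S : C, exists io : 'I_m -> hom C X S, exists pr : 'I_m -> hom C S X,
  forall i j, comp C (pr i) (io j) = if i == j then idm C X else 0.
Proof.
elim: m => [|m [S [io [pr H]]]].
  by exists X, (fun _ => 0), (fun _ => 0); case.
have [T [i1 [i2 [p1 [p2 [h11 h22 h12 h21 _]]]]]] := Hb S X.
exists T.
exists (fun k => if unlift ord_max k is Some k' then comp C i1 (io k') else i2).
exists (fun k => if unlift ord_max k is Some k' then comp C (pr k') p1 else p2).
move=> i j.
case: (unliftP ord_max i) => [i'|] ->; case: (unliftP ord_max j) => [j'|] -> /=.
- rewrite -compA (compA p1) h11 comp1f H.
  by rewrite (inj_eq (@lift_inj _ ord_max)).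
- rewrite -compA h12 comp0r.
  by case: eqP => // /esym /eqP; rewrite (negbTE (neq_lift _ _)).
- rewrite (compA p2) h21 comp0l.
  by case: eqP => // /eqP; rewrite (negbTE (neq_lift _ _)).
- by rewrite h22 eqxx.
Qed.

Lemma kiso (K : fieldType) (D : kcat K) (A A' : kobj D)
  (P : hom D (kob A') (kob A)) (Q : hom D (kob A) (kob A')) :
  kid A' = comp D Q (comp D (kid A) P) ->
  comp D (kid A) (comp D P (comp D Q (kid A))) = kid A ->
  exists f : hom (karoubi D) A' A, is_iso f.
Proof.
move=> H1 H2.
have H2' := H2; rewrite !compA in H2'.
have mP : comp D (kid A) P \in @kpred _ D A' A.
  rewrite unfold_in; apply/eqP; rewrite H1 !compA kidP H2' //.
have mN : comp D Q (kid A) \in @kpred _ D A A'.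
  rewrite unfold_in; apply/eqP; rewrite H1 -!compA kidP H2 //.
exists (KHom mP : hom (karoubi D) A' A); exists (KHom mN : hom (karoubi D) A A').
split; apply: val_inj => /=.
  by rewrite H1 -!compA (compA (kid A) (kid A)) kidP.
by rewrite -!compA H2.
Qed.

Section Funct.
Variables (K : fieldType) (C : kcat K) (n : nat) (i0 : 'I_n).
Local Notation M := (matcat C n).
Local Notation d00 := (d00 (C:=C) i0).

Lemma F1ob_proof (A : kobj C) : comp M (d00 (kid A)) (d00 (kid A)) = d00 (kid A).
Proof. by rewrite d00_comp kidP. Qed.
Definition F1ob (A : kobj C) : kobj M :=
  existT _ (kob A) (exist _ (d00 (kid A)) (F1ob_proof A)).

Lemma F1map_proof (A B : kobj C) (f : khom A B) :
  d00 (val f) \in @kpred _ M (F1ob A) (F1ob B).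
Proof.
rewrite unfold_in; apply/eqP; rewrite !d00_comp; congr d00.
by move: (kvalP f); rewrite unfold_in => /eqP.
Qed.
Definition F1map (A B : karoubi C) (f : hom (karoubi C) A B) :
  hom (karoubi M) (F1ob A) (F1ob B) := KHom (F1map_proof f).

Lemma F1_lin (X Y : karoubi C) (a : K) (f g : hom (karoubi C) X Y) :
  F1map (a *: f + g) = a *: F1map f + F1map g.
Proof. by apply: val_inj; rewrite /= d00_lin. Qed.
Lemma F1_comp (X Y Z : karoubi C) (f : hom (karoubi C) Y Z) (g : hom (karoubi C) X Y) :
  F1map (comp (karoubi C) f g) = comp (karoubi M) (F1map f) (F1map g).
Proof. by apply: val_inj; symmetry; exact: d00_comp. Qed.
Lemma F1_id (X : karoubi C) : F1map (idm (karoubi C) X) = idm (karoubi M) (F1ob X).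
Proof. by apply: val_inj. Qed.
Definition F1 : kfunctor (karoubi C) (karoubi M) := KFunctor F1_lin F1_comp F1_id.

Lemma F2ob_proof (X : C) : comp M (d00 (idm C X)) (d00 (idm C X)) = d00 (idm C X).
Proof. by rewrite d00_comp comp1f. Qed.
Definition F2ob (X : C) : kobj M :=
  existT _ X (exist _ (d00 (idm C X)) (F2ob_proof X)).
Lemma F2map_proof (X Y : C) (f : hom C X Y) :
  d00 f \in @kpred _ M (F2ob X) (F2ob Y).
Proof. by rewrite unfold_in; apply/eqP; rewrite !d00_comp comp1f compf1. Qed.
Definition F2map (X Y : C) (f : hom C X Y) :
  hom (karoubi M) (F2ob X) (F2ob Y) := KHom (F2map_proof f).
Lemma F2_lin (X Y : C) (a : K) (f g : hom C X Y) :
  F2map (a *: f + g) = a *: F2map f + F2map g.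
Proof. by apply: val_inj; rewrite /= d00_lin. Qed.
Lemma F2_comp (X Y Z : C) (f : hom C Y Z) (g : hom C X Y) :
  F2map (comp C f g) = comp (karoubi M) (F2map f) (F2map g).
Proof. by apply: val_inj; symmetry; exact: d00_comp. Qed.
Lemma F2_id (X : C) : F2map (idm C X) = idm (karoubi M) (F2ob X).
Proof. by apply: val_inj. Qed.
Definition F2 : kfunctor C (karoubi M) := KFunctor F2_lin F2_comp F2_id.

Lemma F1_inj (X Y : karoubi C) (f g : hom (karoubi C) X Y) :
  fmap F1 f = fmap F1 g -> f = g.
Proof. by move=> /(congr1 val) /= /d00_inj H; apply: val_inj. Qed.

Lemma F2_inj (X Y : C) (f g : hom C X Y) : fmap F2 f = fmap F2 g -> f = g.
Proof. by move=> /(congr1 val) /= /d00_inj. Qed.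

Lemma F1_full (X Y : karoubi C) (g : hom (karoubi M) (fobj F1 X) (fobj F1 Y)) :
  exists f, fmap F1 f = g.
Proof.
have hN : comp M (d00 (kid Y)) (comp M (val g) (d00 (kid X))) = val g.
  by move: (kvalP g); rewrite unfold_in => /eqP.
rewrite d00_sand in hN.
have h00 := congr1 (fun F : hom M (kob X) (kob Y) => F (i0, i0)) hN.
rewrite /= ffunE /= eqxx /= in h00.
have mf : (val g) (i0, i0) \in @kpred _ C X Y.
  by rewrite unfold_in; apply/eqP.
exists (KHom mf); apply: val_inj => /=.
by rewrite -{2}hN h00.
Qed.

Lemma F2_full (X Y : C) (g : hom (karoubi M) (fobj F2 X) (fobj F2 Y)) :
  exists f, fmap F2 f = g.
Proof.
have hN : comp M (d00 (idm C Y)) (comp M (val g) (d00 (idm C X))) = val g.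
  by move: (kvalP g); rewrite unfold_in => /eqP.
rewrite d00_sand comp1f compf1 in hN.
exists ((val g) (i0, i0)); apply: val_inj => /=.
by [].
Qed.
End Funct.

Section ES.
Variables (K : fieldType) (C : kcat K) (n : nat) (i0 : 'I_n).
Local Notation M := (matcat C n).
Local Notation d00 := (d00 (C:=C) i0).

Lemma es_core (Hb : forall X Y : C, exists (S : C) (i1 : hom C X S) (i2 : hom C Y S)
    (p1 : hom C S X) (p2 : hom C S Y), is_biproduct i1 i2 p1 p2) (b : kobj M) :
  exists (S : C) (P : hom M S (kob b)) (Q : hom M (kob b) S) (et : hom C S S),
    comp M P Q = idm M (kob b) /\ d00 et = comp M Q (comp M (kid b) P) /\
    comp C et et = et.
Proof.
have [S [io [pr H]]] := nbip Hb n (kob b).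
have hPQ : comp M (Pm i0 pr) (Qm i0 io) = idm M (kob b) by exact: PQ.
set P := Pm i0 pr; set Q := Qm i0 io; set E := kid b.
have HE : comp M E E = E by exact: kidP.
set et := (comp M Q (comp M E P)) (i0, i0).
have Hd : d00 et = comp M Q (comp M E P).
  have -> : comp M Q (comp M E P) =
      comp M (d00 (idm C S)) (comp M (comp M Q (comp M E P)) (d00 (idm C S))).
    by rewrite !compA d00Q -!compA Pd00.
  by rewrite d00_sand comp1f compf1.
exists S, P, Q, et; split => //; split => //.
apply: (d00_inj (i0:=i0)); rewrite -d00_comp Hd.
by rewrite -!compA (compA P Q) hPQ comp1f (compA E E) HE.
Qed.

Lemma es1 (Hb : forall X Y : C, exists (S : C) (i1 : hom C X S) (i2 : hom C Y S)
    (p1 : hom C S X) (p2 : hom C S Y), is_biproduct i1 i2 p1 p2) (b : karoubi M) :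
  exists a : karoubi C, exists f : hom (karoubi M) (fobj (F1 C i0) a) b, is_iso f.
Proof.
have [S [P [Q [et [hPQ [Hd Hid]]]]]] := es_core Hb b.
exists (existT _ S (exist _ et Hid) : kobj C).
apply: kiso; first exact: Hd.
by rewrite (compA P Q) hPQ comp1f kidP.
Qed.

Lemma es2 (Hb : forall X Y : C, exists (S : C) (i1 : hom C X S) (i2 : hom C Y S)
    (p1 : hom C S X) (p2 : hom C S Y), is_biproduct i1 i2 p1 p2) (Hic : idempotent_complete C) (b : karoubi M) :
  exists a : C, exists f : hom (karoubi M) (fobj (F2 C i0) a) b, is_iso f.
Proof.
have [S [P [Q [et [hPQ [Hd Hid]]]]]] := es_core Hb b.
have [Y [s [r [hrs hsr]]]] := Hic S et Hid.
exists Y.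
apply: (kiso (A:=b) (A':=fobj (F2 C i0) Y) (P:=comp M P (d00 s)) (Q:=comp M (d00 r) Q)).
  have -> : comp M (comp M (d00 r) Q) (comp M (kid b) (comp M P (d00 s))) =
     comp M (d00 r) (comp M (comp M Q (comp M (kid b) P)) (d00 s)).
    by rewrite -!compA.
  by rewrite -Hd !d00_comp -hsr !compA hrs comp1f hrs.
rewrite -!compA (compA (d00 s) (d00 r)) d00_comp hsr Hd -!compA.
by rewrite (compA P Q) hPQ comp1f (compA (kid b) (kid b)) kidP (compA P Q) hPQ comp1f kidP.
Qed.
End ES.

End Helpers.

Theorem lemma5p2 (K : fieldType) (C : kcat K) (n : nat) :
  additive C -> (0 < n)%N ->
  kequivalent (karoubi C) (karoubi (matcat C n)) /\
  (idempotent_complete C -> kequivalent C (karoubi (matcat C n))).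
Proof.
Import Helpers.
move=> [_ Hb] hn; pose i0 : 'I_n := Ordinal hn.
split.
  exists (F1 C i0); apply: ffes_equiv.
  - exact: F1_inj.
  - exact: F1_full.
  - exact: es1.
move=> Hic; exists (F2 C i0); apply: ffes_equiv.
- exact: F2_inj.
- exact: F2_full.
- exact: es2.
Qed.
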